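(* Under the setting described in the context, if $\mathbb P^x(\zeta<\infty)=1$ for every $x$, then $\bigcap_{g\in C_0^{0,1}(\mathbb R^d)}\Gamma_{out}[g]=\partial_0 O$.
   Context: Let $d\ge1$, $\mathbb D^d$ the space of càdlàg paths $[0,\infty)\to\mathbb R^d$, $X_t(\omega)=\omega(t)$. $\{P_t\}$ is a Feller semigroup on $C_0(\mathbb R^d)$ with generator whose domain contains $C_0^\infty(\mathbb R^d)$; $\mathbb P^x$ is the law on $\mathbb D^d$ of the càdlàg Feller process with this semigroup started at $x$, $\mathbb E^x$ its expectation (filtration: natural filtration augmented by all $\mathbb P^\nu$-null sets, intersected over initial laws $\nu$). $O\subset\mathbb R^d$ is a connected bounded open set; $\ell$ is a fixed Lipschitz function vanishing at infinity; $\lambda>0$. $C_0^{0,1}(\mathbb R^d)$ denotes the Lipschitz functions on $\mathbb R^d$ vanishing at infinity. $\tau_B(\omega)=\inf\{t>0:\omega(t)\notin B\}$, $\zeta=\tau_{\bar O}$. For $g\in C_0^{0,1}(\mathbb R^d)$ let $v_g(x)=\mathbb E^x\big[\int_0^\zeta e^{-\lambda s}\ell(X_s)ds+e^{-\lambda\zeta}g(X_\zeta)\big]$ and $\Gamma_{out}[g]=\{x\in\partial O: v_g(x)=g(x)\}$. A point $x$ is regular for $B$ if $\mathbb P^x(\tau_{B^c}=0)=1$; $\partial_0O=\{x\in\partial O: x$ regular for $\bar O^c\}$. *)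

(* Defs.v *)
From HB Require Import structures.
From mathcomp Require Import all_boot all_order all_algebra.
From mathcomp Require Import all_classical all_reals all_analysis.
Set Implicit Arguments. Unset Strict Implicit. Unset Printing Implicit Defensive.
Import Order.TTheory GRing.Theory Num.Theory.
Import numFieldNormedType.Exports.
Local Open Scope classical_set_scope.
Local Open Scope ring_scope.

Section Defs.
Context {R : realType} {d : nat}.
Local Notation V := 'rV[R]_d.

Definition vanishes_at_infty (f : V -> R) : Prop :=
  forall e : R, 0 < e -> exists M : R, forall x : V, M < `|x| -> `|f x| < e.

Definition C0 (f : V -> R) : Prop := continuous f /\ vanishes_at_infty f.

Definition C0_lip : set (V -> R) := [set f | lipschitz f /\ vanishes_at_infty f].

Fixpoint Cn (n : nat) (f : V -> R) : Prop :=
  match n with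
  | 0 => continuous f
  | n.+1 => (forall x v : V, derivable f x v) /\ (forall v : V, Cn n ('D_v f))
  end.

Definition Cc_infty (f : V -> R) : Prop :=
  (forall n, Cn n f) /\ compact (closure [set x | f x != 0]).

Record feller_semigroup (P : R -> (V -> R) -> (V -> R)) : Prop := {
  fs_C0 : forall t f, 0 <= t -> C0 f -> C0 (P t f);
  fs_lin : forall t (a : R) f g, 0 <= t -> C0 f -> C0 g ->
    P t (fun x => a * f x + g x) = (fun x => a * P t f x + P t g x);
  fs_pos : forall t f, 0 <= t -> C0 f -> (forall x, 0 <= f x <= 1) ->
    forall x, 0 <= P t f x <= 1;
  fs_0 : forall f, C0 f -> P 0 f = f;
  fs_semi : forall s t f, 0 <= s -> 0 <= t -> C0 f -> P (s + t) f = P s (P t f);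
  fs_strong : forall f, C0 f -> forall e : R, 0 < e ->
    exists delta : R, 0 < delta /\
      forall t x, 0 < t < delta -> `|P t f x - f x| <= e }.

Definition in_generator_domain (P : R -> (V -> R) -> (V -> R)) (f : V -> R) :=
  C0 f /\ exists g, C0 g /\ forall e : R, 0 < e ->
    exists delta : R, 0 < delta /\
      forall t x, 0 < t < delta -> `|(P t f x - f x) / t - g x| <= e.

Definition cadlag (w : R -> V) : Prop :=
  forall t : R, 0 <= t ->
    (w s @[s --> t^'+] --> w t) /\ (0 < t -> cvg (w s @[s --> t^'-])).

Context {dO : measure_display} {Omega : measurableType dO}.

Definition natural_sigma (X : R -> Omega -> V) (s : R) : set (set Omega) :=
  <<s [set A | exists u, 0 <= u <= s /\
                 exists U : set V, open U /\ A = X u @^-1` U] >>.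

Definition feller_process (P : R -> (V -> R) -> (V -> R))
    (X : R -> Omega -> V) (PP : V -> probability Omega R) : Prop :=
  (forall w, cadlag (fun t => X t w)) /\
  (forall t (U : set V), 0 <= t -> open U -> measurable (X t @^-1` U)) /\
  (forall x, PP x [set w | X 0 w = x] = 1%E) /\
  (forall x s t f A, 0 <= s -> s <= t -> C0 f -> natural_sigma X s A ->
     (\int[PP x]_(w in A) (f (X t w))%:E =
      \int[PP x]_(w in A) (P (t - s) f (X s w))%:E)%E).

Definition hit_tau (X : R -> Omega -> V) (B : set V) (w : Omega) : \bar R :=
  ereal_inf [set t%:E | t in [set t : R | 0 < t /\ ~ B (X t w)]].

Definition boundary (O : set V) : set V := closure O `\` interior O.

Definition payoff (X : R -> Omega -> V) (O : set V) (ell : V -> R) (lam : R)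
    (g : V -> R) (w : Omega) : R :=
  let z := hit_tau X (closure O) w in
  Rintegral lebesgue_measure [set s : R | 0 <= s /\ (s%:E < z)%E]
     (fun s => expR (- (lam * s)) * ell (X s w)) +
  (if z is r%:E then expR (- (lam * r)) * g (X r w) else 0).

Definition value_fun (X : R -> Omega -> V) (PP : V -> probability Omega R)
    (O : set V) (ell : V -> R) (lam : R) (g : V -> R) (x : V) : \bar R :=
  \int[PP x]_w (payoff X O ell lam g w)%:E.

Definition Gamma_out X PP O ell lam (g : V -> R) : set V :=
  [set x | boundary O x /\ value_fun X PP O ell lam g x = (g x)%:E].

Definition regular_for (X : R -> Omega -> V) (PP : V -> probability Omega R)
    (B : set V) (x : V) : Prop :=
  PP x [set w | hit_tau X (~` B) w = 0%E] = 1%E.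

Definition boundary0 X PP (O : set V) : set V :=
  [set x | boundary O x /\ regular_for X PP (~` closure O) x].

End Defs.

(* Main.v *)
Require Import Defs.
From HB Require Import structures.
From mathcomp Require Import all_boot all_order all_algebra.
From mathcomp Require Import all_classical all_reals all_analysis.
From mathcomp Require Import ring lra.
From mathcomp Require Import measurable_realfun.
Import Order.TTheory GRing.Theory Num.Theory.
Import numFieldNormedType.Exports.
Local Open Scope classical_set_scope.
Local Open Scope ring_scope.

Lemma maxBr (R : realType) (c : R) : Num.max c 0 - Num.max (- c) 0 = c.
Proof.
case: (leP 0 c) => c0.
- by rewrite (max_idPr _) ?subr0 // oppr_le0.
- by rewrite (max_idPl _) ?sub0r ?opprK // oppr_ge0 ltW.
Qed.

Section nm.
Local Open Scope ereal_scope.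
Context d (T : measurableType d) (R : realType) (mu : {measure set T -> \bar R}).

Lemma nm_le0 (D : set T) (f g : T -> \bar R) :
  (forall x, D x -> 0 <= f x) -> (forall x, D x -> f x <= g x) ->
  \int[mu]_(x in D) f x <= \int[mu]_(x in D) g x.
Proof.
move=> f0 fg.
have g0 : forall x, D x -> 0 <= g x by move=> x Dx; exact: le_trans (f0 x Dx) (fg x Dx).
rewrite !ge0_integralE//.
apply: ereal_sup_le => _ /= [h hf <-]; exists h => //= x.
apply: le_trans (hf x) _; rewrite /patch; case: ifP => // /set_mem Dx.
exact: fg.
Qed.

Lemma nm_le (D : set T) (f g : T -> \bar R) :
  (forall x, D x -> 0 <= g x) ->
  (forall x, D x -> - g x <= f x /\ f x <= g x) ->
  - (\int[mu]_(x in D) g x) <= (\int[mu]_(x in D) f x) /\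
  (\int[mu]_(x in D) f x) <= (\int[mu]_(x in D) g x).
Proof.
move=> g0 fg.
have -> : \int[mu]_(x in D) f x = \int[mu]_(x in D) f^\+ x - \int[mu]_(x in D) f^\- x.
  exact: integralE.
split.
- rewrite -[X in X <= _]add0e; apply: leeB.
    by apply: integral_ge0 => x _; exact: funepos_ge0.
  apply: nm_le0 => x Dx; first exact: funeneg_ge0.
  rewrite funenegE ge_max g0 // andbT.
  by rewrite leeNl; have [] := fg x Dx.
- rewrite -[X in _ <= X]sube0; apply: leeB; last first.
    by apply: integral_ge0 => x _; exact: funeneg_ge0.
  apply: nm_le0 => x Dx; first exact: funepos_ge0.
  rewrite funeposE ge_max g0 // andbT.
  by have [] := fg x Dx.
Qed.

Lemma nm_le_up (D : set T) (f g : T -> \bar R) :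
  (forall x, D x -> 0 <= g x) -> (forall x, D x -> f x <= g x) ->
  \int[mu]_(x in D) f x <= \int[mu]_(x in D) g x.
Proof.
move=> g0 fg.
have -> : \int[mu]_(x in D) f x = \int[mu]_(x in D) f^\+ x - \int[mu]_(x in D) f^\- x.
  exact: integralE.
rewrite -[X in _ <= X]sube0; apply: leeB; last first.
  by apply: integral_ge0 => x _; exact: funeneg_ge0.
apply: nm_le0 => x Dx; first exact: funepos_ge0.
by rewrite funeposE ge_max g0 // andbT fg.
Qed.
End nm.

Section nm2.
Import HBNNSimple.
Local Open Scope ereal_scope.
Context d (T : measurableType d) (R : realType) (P : probability T R).

Lemma nm_ae_cst0 (M : set T) (h : T -> \bar R) (k : R) :
  measurable M -> P M = 1 -> (0 <= k)%R -> (forall x, 0 <= h x) ->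
  (forall x, M x -> h x = k%:E) -> \int[P]_x h x = k%:E.
Proof.
move=> mM PM k0 h0 hM.
have PC : P (~` M) = 0 by rewrite probability_setC // PM subee.
apply/eqP; rewrite eq_le; apply/andP; split.
- rewrite ge0_integralTE //; apply: ge_ereal_sup => _ /= [s hs <-].
  rewrite -integralT_nnsfun.
  apply: (@le_trans _ _ (\int[P]_x (cst k%:E x))); last first.
    rewrite integral_cst // [X in _ * X](_ : _ = 1) ?mule1 //; exact: probability_setT.
  apply: ae_ge0_le_integral => //.
  + by move=> x _; rewrite lee_fin; exact: fun_ge0.
  + by apply/measurable_realfun.measurable_EFinP; exact: measurable_funP.
  + exists (~` M); split => //; first exact: measurableC.
    move=> x /= Hx Mx; apply: Hx => _.
    by rewrite -(hM x Mx).
- apply: (@le_trans _ _ (\int[P]_x ((k * \1_M x)%R)%:E)).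
    under eq_integral do rewrite EFinM.
    rewrite ge0_integralZl_EFin //.
    + rewrite integral_indic // setIT [X in _ * X](_ : _ = 1) ?mule1 //; exact: PM.
    + by apply/measurable_realfun.measurable_EFinP; exact: measurable_realfun.measurable_indic.
  apply: nm_le0 => x _; first by rewrite lee_fin mulr_ge0.
  rewrite /indic; case: (pselect (M x)) => Mx.
  - by rewrite mem_set // mulr1 hM.
  - by rewrite memNset // mulr0.
Qed.

Lemma nm_ae_cst (M : set T) (f : T -> R) (c : R) :
  measurable M -> P M = 1 -> (forall x, M x -> f x = c) ->
  \int[P]_x (f x)%:E = c%:E.
Proof.
move=> mM PM fM.
rewrite integralE.
have m1 : (0 <= Num.max c 0)%R by rewrite le_max lexx orbT.
have m2 : (0 <= Num.max (- c) 0)%R by rewrite le_max lexx orbT.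
have -> : \int[P]_x (fun x => (f x)%:E)^\+ x = (Num.max c 0)%:E.
  apply: (@nm_ae_cst0 M _ _ mM PM m1).
  by move=> x; exact: funepos_ge0.
  by move=> x Mx; rewrite funeposE fM // -EFin_max.
have -> : \int[P]_x (fun x => (f x)%:E)^\- x = (Num.max (- c) 0)%:E.
  apply: (@nm_ae_cst0 M _ _ mM PM m2).
  by move=> x; exact: funeneg_ge0.
  by move=> x Mx; rewrite funenegE fM // -EFinN -EFin_max.
rewrite -EFinB; congr EFin.
exact: maxBr.
Qed.
End nm2.

Section proc.
Context (R : realType) (d : nat) (dO : measure_display) (Omega : measurableType dO)
  (X : R -> Omega -> 'rV[R]_d).
Hypothesis Xcad : forall w, cadlag (fun t => X t w).
Hypothesis Xmeas : forall t U, 0 <= t -> open U -> measurable (X t @^-1` U).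
Variable C : set 'rV[R]_d.
Hypothesis hC : closed C.

Local Notation zeta := (hit_tau X C).

Lemma zeta_ge0 w : (0 <= zeta w)%E.
Proof.
rewrite /hit_tau; apply/ereal_infP => _ [t [t0 _] <-].
by rewrite lee_fin ltW.
Qed.

Lemma zeta_le (t : R) w : 0 < t -> ~ C (X t w) -> (zeta w <= t%:E)%E.
Proof. by move=> t0 nC; apply: ereal_inf_lbound; exists t. Qed.

Lemma right_rat w (t b : R) : 0 < t -> t < b -> ~ C (X t w) ->
  exists q : rat, t < ratr q /\ ratr q < b /\ ~ C (X (ratr q) w).
Proof.
move=> t0 tb nC.
have [cv _] := Xcad w t (ltW t0).
have oC : open (~` C) by exact: closed_openC.
have Hn : \forall s \near t^'+, ~ C (X s w) /\ s < b.
  near=> s; split; last by near: s; exact: nbhs_right_lt.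
  near: s.
  exact: (cv (~` C) (open_nbhs_nbhs (conj oC nC))).
case: Hn => e /= e0 He.
have [q] : exists q : rat, ratr q \in `]t, t + e[ by apply: rat_in_itvoo; rewrite ltrDl.
rewrite in_itv /= => /andP[tq qe].
have hb : ball_ Num.Def.normr t e (ratr q).
  rewrite /= distrC ger0_norm ?subr_ge0 ?ltW //.
  by rewrite ltrBlDr addrC.
have [h1 h2] := He (ratr q) hb tq.
by exists q.
Unshelve. all: by end_near.
Qed.

Definition Sset (b : R) : set Omega :=
  [set w | forall q : rat, 0 < (ratr q : R) -> ratr q < b -> C (X (ratr q) w)].

Lemma zeta_geP b w : (b%:E <= zeta w)%E <-> Sset b w.
Proof.
split.
- move=> H q q0 qb; apply: contrapT => nC.
  have := le_trans H (zeta_le _ _ q0 nC); rewrite lee_fin => /(lt_le_trans qb).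
  by rewrite ltxx.
- move=> S; apply/ereal_infP => _ [t [t0 nC] <-]; rewrite lee_fin leNgt.
  apply/negP => tb; have [q [tq [qb nCq]]] := right_rat _ _ _ t0 tb nC.
  by apply: nCq; apply: S => //; exact: lt_trans t0 tq.
Qed.

Lemma Sset_meas b : measurable (Sset b).
Proof.
pose F k : set Omega := if (unpickle k : option rat) is Some q then
  (if (0 < (ratr q : R)) && (ratr q < b) then X (ratr q) @^-1` C else setT) else setT.
have -> : Sset b = \bigcap_k F k.
  apply/seteqP; split => w /=.
  - move=> S k _; rewrite /F; case: unpickle => [q|] //.
    by case: ifP => // /andP[q0 qb]; exact: S.
  - move=> H q q0 qb; have := H (pickle q) I; rewrite /F pickleK q0 qb.
    done.
apply: bigcapT_measurable => k; rewrite /F; case: unpickle => [q|] //.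
case: ifP => // /andP[q0 _].
rewrite -[C]setCK -preimage_setC; apply: measurableC.
by apply: Xmeas; [exact: ltW | exact: closed_openC].
Qed.

Lemma zeta0P w : zeta w = 0%E <-> forall n : nat, ~ Sset (n.+1%:R^-1) w.
Proof.
split.
- move=> z0 n /zeta_geP; rewrite z0 lee_fin leNgt.
  by rewrite invr_gt0 ltr0n.
- move=> H; have := zeta_ge0 w.
  case E : (zeta w) => [r| |] // r0.
  + rewrite lee_fin in r0; case: (eqVneq r 0) => [->//|rn0].
    have {}r0 : 0 < r by rewrite lt_neqAle eq_sym rn0.
    exfalso; apply: (H (Num.Def.trunc r^-1)); apply/zeta_geP.
    rewrite E lee_fin ltW // invf_plt ?posrE ?ltr0n ?invr_gt0 //.
    exact: truncnS_gt.
  + by exfalso; apply: (H 0%N); apply/zeta_geP; rewrite E leey.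
Qed.
End proc.

Lemma max0_lip (R : realType) (a b : R) :
  `|Num.max 0 a - Num.max 0 b| <= `|a - b|.
Proof.
case: (leP 0 a) => a0; case: (leP 0 b) => b0.
- by [].
- rewrite subr0 (ger0_norm a0) ger0_norm; lra.
- rewrite sub0r normrN distrC (ger0_norm b0) ger0_norm; lra.
- by rewrite subrr normr0.
Qed.

Section bump.
Context (R : realType) (d : nat).
Local Notation V := 'rV[R]_d.

Definition bump (x0 : V) (c : R) (y : V) : R := c * Num.max 0 (1 - `|y - x0|).

Lemma bump_C0_lip x0 c : 0 <= c -> C0_lip (bump x0 c).
Proof.
move=> c0; split.
- apply: (@klipschitzW _ _ _ c); first exact: (@globally_properfilter _ _ (0, 0)).
  move=> [y1 y2] _ /=; rewrite /bump -mulrBr normrM (ger0_norm c0).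
  apply: ler_wpM2l => //; apply: le_trans; first exact: max0_lip.
  rewrite (_ : (1 - `|y1 - x0|) - (1 - `|y2 - x0|) = `|y2 - x0| - `|y1 - x0|); last by ring.
  apply: (le_trans (ler_dist_dist _ _)).
  by rewrite opprB addrA subrK distrC.
- move=> e e0; exists (`|x0| + 1) => y Hy.
  rewrite /bump (_ : Num.max 0 _ = 0) ?mulr0 ?normr0 //.
  apply/max_idPl; rewrite subr_le0.
  have : `|y| <= `|y - x0| + `|x0| by rewrite -[X in `|X|](subrK x0) ler_normD.
  lra.
Qed.

Lemma bump_at x0 c : bump x0 c x0 = c.
Proof. by rewrite /bump subrr normr0 subr0 (max_idPr ler01) mulr1. Qed.

Lemma bump_le x0 c y : 0 <= c -> 0 <= bump x0 c y <= c.
Proof.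
move=> c0; rewrite /bump mulr_ge0 ?le_max ?lexx //=.
rewrite -[X in _ <= X]mulr1; apply: ler_wpM2l => //.
Qed.

Lemma C0_lip_bounded (f : V -> R) : C0_lip f -> exists L, 0 <= L /\ forall y, `|f y| <= L.
Proof.
case=> hl hv.
case: hl => M0 [_ HM].
have k0 : 0 <= `|M0| + 1 by rewrite addr_ge0.
have hk := HM (`|M0| + 1) (lt_le_trans (ltr_pwDr ltr01 (ler_norm M0)) (lexx _)).
have [M HMv] := hv 1 ltr01.
exists (1 + `|f 0| + (`|M0| + 1) * `|M|); split.
  by rewrite !addr_ge0 // mulr_ge0.
move=> y; case: (ltP M `|y|) => yM.
  have := HMv y yM; have : 0 <= `|f 0| + (`|M0| + 1) * `|M| by rewrite addr_ge0 // mulr_ge0.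
  lra.
have h1 : `|f y - f 0| <= (`|M0| + 1) * `|y - 0| by exact: (hk (y, 0)).
rewrite subr0 in h1.
have h2 : `|f y| <= `|f y - f 0| + `|f 0|.
  by rewrite -[X in `|X| <= _](subrK (f 0)) ler_normD.
have h3 : (`|M0| + 1) * `|y| <= (`|M0| + 1) * `|M|.
  by apply: ler_wpM2l => //; apply: (le_trans yM); exact: ler_norm.
lra.
Qed.
End bump.

Lemma Rint_bound (R : realType) (L lam : R) (F : R -> R) (D : set R) :
  0 < lam -> 0 <= L -> D `<=` [set s | 0 <= s] ->
  (forall s, D s -> `|F s| <= L * expR (- (lam * s))) ->
  Rintegral lebesgue_measure D F <= L / lam.
Proof.
move=> lam0 L0 D0 FL.
pose G s := ((L / lam) * exponential_pdf lam s)%:E.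
have G0 s : (0 <= G s)%E.
  rewrite lee_fin; apply: mulr_ge0; first by apply: divr_ge0 => //; exact: ltW.
  by apply: exponential_pdf_ge0; exact: ltW.
have GD s : D s -> G s = (L * expR (- (lam * s)))%:E.
  move=> Ds; rewrite /G exponential_pdfE; last exact: D0.
  congr EFin; rewrite mulNr; field; exact: lt0r_neq0.
have hfg : forall s, D s -> (- G s <= (F s)%:E)%E /\ ((F s)%:E <= G s)%E.
  move=> s Ds; rewrite GD // -EFinN !lee_fin.
  by apply/andP; rewrite -ler_norml; exact: FL.
have [hI1 hI2] := @nm_le _ _ _ lebesgue_measure D _ G (fun s _ => G0 s) hfg.
have hG : (\int[lebesgue_measure]_(s in D) G s <= (L / lam)%:E)%E.
  rewrite integral_mkcond.
  apply: le_trans; first apply: (@nm_le0 _ _ _ lebesgue_measure setT (G \_ D) G).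
  - by move=> s _; rewrite /patch; case: ifP.
  - by move=> s _; rewrite /patch; case: ifP.
  rewrite /G; under eq_integral do rewrite EFinM.
  rewrite ge0_integralZl_EFin //.
  - by rewrite integral_exponential_pdf // mule1.
  - by move=> s _; rewrite lee_fin; apply: exponential_pdf_ge0; exact: ltW.
  - by apply/measurable_realfun.measurable_EFinP; exact: measurable_exponential_pdf.
  - by apply: divr_ge0 => //; exact: ltW.
rewrite /Rintegral.
move: hI1 hI2; case: (\int[lebesgue_measure]_(x in D) (F x)%:E)%E => [r| |] /=.
- by move=> _ h; rewrite -lee_fin; exact: le_trans h hG.
- by move=> _ h; have := le_trans h hG; rewrite leye_eq.
- move=> h _; have : (- (L / lam)%:E <= -oo)%E.
    by apply: le_trans h; rewrite leeN2.
  by rewrite leeNy_eq.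
Qed.

Theorem lemmaA1 (R : realType) (d : nat) (hd : (1 <= d)%N)
  (P : R -> ('rV[R]_d -> R) -> ('rV[R]_d -> R))
  (hP : feller_semigroup P)
  (hgen : forall f, Cc_infty f -> in_generator_domain P f)
  (dO : measure_display) (Omega : measurableType dO)
  (X : R -> Omega -> 'rV[R]_d) (PP : 'rV[R]_d -> probability Omega R)
  (hX : feller_process P X PP)
  (O : set 'rV[R]_d) (hOo : open O) (hOc : connected O) (hOb : bounded_set O)
  (ell : 'rV[R]_d -> R) (hell : C0_lip ell) (lam : R) (hlam : 0 < lam)
  (hfin : forall x, PP x [set w | (hit_tau X (closure O) w < +oo)%E] = 1%E) :
  \bigcap_(g in C0_lip) Gamma_out X PP O ell lam g = boundary0 X PP O.
Proof.
have [Xcad [Xmeas [X0 _]]] := hX.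
have hC : closed (closure O) := @closed_closure _ O.
pose S (n : nat) := Sset R d dO Omega X (closure O) n.+1%:R^-1.
have Smeas n : measurable (S n) := @Sset_meas _ _ _ _ X Xmeas _ hC _.
have Z0 : [set w | hit_tau X (closure O) w = 0%E] = ~` \bigcup_n S n.
  apply/seteqP; split => w /=.
  - move=> /(zeta0P _ _ _ _ _ Xcad _ hC w) H [n _ Sn]; exact: H n Sn.
  - move=> H; apply/(zeta0P _ _ _ _ _ Xcad _ hC w) => n Sn; by apply: H; exists n.
have Z0m : measurable [set w | hit_tau X (closure O) w = 0%E].
  by rewrite Z0; apply: measurableC; exact: bigcupT_measurable.
have X0m x : measurable [set w | X 0 w = x].
  have -> : [set w | X 0 w = x] = ~` (X 0 @^-1` ~` [set x]) by rewrite preimage_setC setCK.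
  apply: measurableC; apply: Xmeas => //; apply: closed_openC.
  exact: (accessible_closed_set1 (hausdorff_accessible (@norm_hausdorff _ _))).
apply/seteqP; split => x.
- move=> Hx.
  have [bx _] := Hx _ (bump_C0_lip _ _ x 0 (lexx 0)).
  split => //; rewrite /regular_for setCK.
  apply: contrapT => nreg.
  have [n Sn] : exists n, (0 < PP x (S n))%E.
    apply: contrapT => H; apply: nreg.
    have HS n : PP x (S n) = 0%E.
      apply/eqP; rewrite eq_le measure_ge0 andbT leNgt; apply/negP => h.
      by apply: H; exists n.
    rewrite Z0 probability_setC; last exact: bigcupT_measurable.
    suff -> : PP x (\bigcup_n S n) = 0%E by rewrite sube0.
    apply/eqP; rewrite eq_le measure_ge0 andbT.
    have h := @measure_sigma_subadditive _ _ _ (PP x) (\bigcup_n S n) S Smeas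
      (bigcupT_measurable _ Smeas) (@subset_refl _ _).
    rewrite eseries0 in h; first exact: h.
    by move=> i _ _; exact: HS.
  have [L [L0 HL]] := C0_lip_bounded _ _ _ hell.
  pose K := L / lam.
  have K0 : 0 <= K by apply: divr_ge0 => //; exact: ltW.
  pose b : R := n.+1%:R^-1.
  have b0 : 0 < b by rewrite invr_gt0 ltr0n.
  have Sfin : PP x (S n) = (fine (PP x (S n)))%:E.
    rewrite fineK // ge0_fin_numE ?measure_ge0 //.
    exact: le_lt_trans (probability_le1 _ (Smeas n)) (ltey _).
  pose m := fine (PP x (S n)).
  have m0 : 0 < m by rewrite -lte_fin -Sfin.
  pose del := 1 - expR (- (lam * b)).
  have del0 : 0 < del by rewrite subr_gt0 expR_lt1 oppr_lt0 mulr_gt0.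
  have del1 : del <= 1 by rewrite lerBlDr lerDl expR_ge0.
  pose c := (K + 1) / (del * m).
  have c0 : 0 < c by rewrite divr_gt0 ?mulr_gt0 // ltr_wpDl.
  have cdm : c * del * m = K + 1.
    rewrite /c; field; apply/andP; split; exact: lt0r_neq0.
  pose g := bump R d x c.
  have [_ Hv] := Hx g (bump_C0_lip _ _ x c (ltW c0)).
  rewrite /= /g bump_at in Hv.
  pose u w : R := K + c * (1 - del) + c * del * \1_(~` S n) w.
  have pu w : payoff X O ell lam g w <= u w.
    rewrite /payoff /u /=.
    have ha : Rintegral lebesgue_measure
        [set s | 0 <= s /\ (s%:E < hit_tau X (closure O) w)%E]
        (fun s => expR (- (lam * s)) * ell (X s w)) <= K.
      apply: Rint_bound => //; first by move=> s [].
      move=> s _; rewrite normrM ger0_norm ?expR_ge0 // mulrC.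
      by apply: ler_wpM2r; [exact: expR_ge0 | exact: HL].
    have z0 := zeta_ge0 _ _ _ _ X (closure O) w.
    have cd1 : 0 <= c * (1 - del) by apply: mulr_ge0; [exact: ltW|rewrite subr_ge0].
    have cd2 : 0 <= c * del by apply: mulr_ge0; exact: ltW.
    have hg : (if hit_tau X (closure O) w is r%:E then expR (- (lam * r)) * g (X r w) else 0)
        <= c * (1 - del) + c * del * \1_(~` S n) w.
      case: (pselect (S n w)) => Sw.
      - rewrite indicE memNset; last by move=> /= h; apply: h.
        rewrite mulr0 addr0.
        have bz := (zeta_geP _ _ _ _ _ Xcad _ hC _ w).2 Sw.
        move: bz z0; case: (hit_tau X (closure O) w) => [r| |] //= bz z0.
        rewrite lee_fin in bz.
        have [g0 gc] := andP (bump_le _ _ x c (X r w) (ltW c0)).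
        rewrite mulrC (_ : 1 - del = expR (- (lam * b))); last by rewrite /del; ring.
        apply: ler_pM => //.
        by rewrite ler_expR lerN2; apply: ler_wpM2l => //; exact: ltW.
      - rewrite indicE mem_set // mulr1.
        rewrite (_ : c * (1 - del) + c * del = c); last by ring.
        move: z0; case: (hit_tau X (closure O) w) => [r| |] //= z0; last exact: ltW.
          rewrite lee_fin in z0.
          have [g0 gc] := andP (bump_le _ _ x c (X r w) (ltW c0)).
          rewrite -[X in _ <= X]mul1r; apply: ler_pM => //.
          by rewrite -expR0 ler_expR oppr_le0 mulr_ge0 // ltW.
    by rewrite -addrA; apply: lerD.
  have u0 w : 0 <= u w.
    have hi : 0 <= \1_(~` S n) w :> R by rewrite indicE; case: (_ \in _).
    have h1 : 0 <= c * (1 - del) by apply: mulr_ge0; [exact: ltW|rewrite subr_ge0].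
    have h2 : 0 <= c * del * \1_(~` S n) w.
      by apply: mulr_ge0 => //; apply: mulr_ge0; exact: ltW.
    rewrite /u; lra.
  have iu : (\int[PP x]_w (u w)%:E = (K + c - c * del * m)%:E)%E.
    have hi w : (0 <= (\1_(~` S n) w : R)%:E)%E.
      by rewrite lee_fin indicE; case: (_ \in _).
    have mi : measurable_fun setT (EFin \o (\1_(~` S n) : Omega -> R)).
      apply/measurable_realfun.measurable_EFinP.
      exact/measurable_realfun.measurable_indic/measurableC.
    have cd0 : 0 <= c * del by apply: mulr_ge0; exact: ltW.
    have i1 : (\int[PP x]_w (K + c * (1 - del))%:E = (K + c * (1 - del))%:E)%E.
      rewrite integral_cst //.
      by rewrite [X in (_ * X)%E](_ : _ = 1%E) ?mule1 //; exact: probability_setT.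
    have hc : PP x (~` S n) = (1 - m)%:E by rewrite probability_setC // Sfin.
    have i2 : (\int[PP x]_w ((c * del)%:E * (\1_(~` S n) w)%:E) =
               (c * del * (1 - m))%:E)%E.
      rewrite (ge0_integralZl_EFin (PP x) measurableT (fun w _ => hi w) mi cd0).
      rewrite integral_indic ?setIT //; last exact: measurableC.
      by rewrite [X in (_ * X)%E](_ : _ = (1 - m)%:E) ?EFinM //; exact: hc.
    rewrite (_ : (fun w => (u w)%:E) = fun w =>
       ((K + c * (1 - del))%:E + (c * del)%:E * (\1_(~` S n) w)%:E)%E); last first.
      by apply/funext => w; rewrite /u -EFinM -EFinD.
    rewrite ge0_integralD //; first last.
    - exact: measurable_funeM.
    - by move=> w _; rewrite mule_ge0.
    - by move=> w _; rewrite lee_fin addr_ge0 // mulr_ge0 ?subr_ge0 // ltW.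
    rewrite i1 i2 -EFinD; congr EFin; ring.
  have := @nm_le_up _ _ _ (PP x) setT (fun w => (payoff X O ell lam g w)%:E)
    (fun w => (u w)%:E) (fun w _ => u0 w) (fun w _ => pu w).
  rewrite /value_fun in Hv; rewrite Hv iu lee_fin cdm.
  lra.
- move=> [bx reg] g Cg; split => //.
  rewrite /regular_for setCK in reg.
  pose M := [set w | hit_tau X (closure O) w = 0%E] `&` [set w | X 0 w = x].
  have Mm : measurable M by apply: measurableI.
  have PM : PP x M = 1%E.
    have h1 : PP x (~` M) = 0%E.
      apply/eqP; rewrite eq_le measure_ge0 andbT.
      rewrite setCI; apply: le_trans (measureU2 _ _ _) _.
      + exact: measurableC.
      + exact: measurableC.
      have e1 : PP x (~` [set w | hit_tau X (closure O) w = 0%E]) = 0%E.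
        by rewrite probability_setC // reg subee.
      have e2 : PP x (~` [set w | X 0 w = x]) = 0%E.
        by rewrite probability_setC // (X0 x) subee.
      rewrite [X in (X + _)%E](_ : _ = 0%E); last exact: e1.
      by rewrite [X in (_ + X)%E](_ : _ = 0%E) ?adde0 //; exact: e2.
    have := probability_setC (PP x) (measurableC Mm).
    by rewrite setCK h1 sube0.
  rewrite /value_fun; apply: (@nm_ae_cst _ _ _ (PP x) M _ _ Mm PM) => w [/= zw xw].
  rewrite /payoff /= zw /=.
  have -> : [set s : R | 0 <= s /\ (s%:E < 0%:E)%E] = set0.
    by apply/seteqP; split => s //= [s0]; rewrite lte_fin ltNge s0.
  by rewrite Rintegral_set0 mulr0 oppr0 expR0 mul1r add0r xw.
Qed.
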